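(* The set $\mathcal{K}(H)$ of compact operators is an $F_{\sigma\delta}$ subset of $\mathcal{B}(H)$ in the strong operator topology, i.e., a countable intersection of countable unions of strongly closed sets.
   Context: $H$ is a fixed infinite-dimensional separable complex Hilbert space, $\mathcal{B}(H)$ the bounded operators on $H$, with the strong operator topology (topology of pointwise norm convergence on $H$). $\mathcal{K}(H)$ is the set of compact operators. *)

(* Defs.v *)
From Stdlib Require Import Reals List.
Open Scope R_scope.

Record C := mkC { re : R ; im : R }.
Definition Cadd (a b : C) : C := mkC (re a + re b) (im a + im b).
Definition Csub (a b : C) : C := mkC (re a - re b) (im a - im b).
Definition Cmul (a b : C) : C :=
  mkC (re a * re b - im a * im b) (re a * im b + im a * re b).
Definition Cnorm2 (a : C) : R := re a * re a + im a * im a.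

Definition vec := nat -> C.
Definition vsub (x y : vec) : vec := fun n => Csub (x n) (y n).

Definition psum (x : vec) (n : nat) : R := sum_f_R0 (fun k => Cnorm2 (x k)) n.

Definition normsq_le (x : vec) (d : R) : Prop := forall n, psum x n <= d.

Definition l2 (x : vec) : Prop := exists d, normsq_le x d.

(* The separable infinite-dimensional complex Hilbert space H = l^2(N). *)
Definition H := { x : vec | l2 x }.
Definition hv (x : H) : vec := proj1_sig x.

Definition dist_lt (x y : vec) (eps : R) : Prop :=
  exists d, d < eps * eps /\ normsq_le (vsub x y) d.

Record BOp := mkBOp {
  op : H -> H ;
  op_add : forall x y z : H,
      (forall n, hv z n = Cadd (hv x n) (hv y n)) ->
      forall n, hv (op z) n = Cadd (hv (op x) n) (hv (op y) n) ;
  op_scale : forall (c : C) (x z : H),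
      (forall n, hv z n = Cmul c (hv x n)) ->
      forall n, hv (op z) n = Cmul c (hv (op x) n) ;
  op_bdd : exists M, 0 <= M /\
      forall (x : H) d, normsq_le (hv x) d -> normsq_le (hv (op x)) (M * M * d)
}.

Definition converges (u : nat -> H) (y : H) : Prop :=
  forall eps, eps > 0 -> exists N, forall k, (k >= N)%nat -> dist_lt (hv (u k)) (hv y) eps.

(* T is compact: the image of the unit ball is relatively compact, i.e.
   every bounded sequence x_k has a subsequence with T x_{phi k} convergent in H. *)
Definition compact_op (T : BOp) : Prop :=
  forall x : nat -> H, (exists M, forall k, normsq_le (hv (x k)) M) ->
  exists (phi : nat -> nat) (y : H),
    (forall k, (phi k < phi (S k))%nat) /\
    converges (fun k => op T (x (phi k))) y.

Definition SOT_open (U : BOp -> Prop) : Prop :=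
  forall T, U T -> exists (xs : list H) (eps : R), eps > 0 /\
    forall S, (forall x, In x xs -> dist_lt (hv (op S x)) (hv (op T x)) eps) -> U S.

Definition SOT_closed (F : BOp -> Prop) : Prop := SOT_open (fun T => ~ F T).

Definition SOT_Fsigmadelta (P : BOp -> Prop) : Prop :=
  exists F : nat -> nat -> BOp -> Prop,
    (forall m n, SOT_closed (F m n)) /\
    (forall T, P T <-> forall m, exists n, F m n T).

(* Main.v *)
Require Import Defs.
From Stdlib Require Import Reals List Arith Lra Lia Psatz Rtopology ClassicalEpsilon Classical.
Open Scope R_scope.

Lemma fchoice {A B : Type} (P : A -> B -> Prop) :
  (forall a, exists b, P a b) -> exists f : A -> B, forall a, P a (f a).
Proof.
  intro Hx. exists (fun a => proj1_sig (constructive_indefinite_description _ (Hx a))).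
  intro a. exact (proj2_sig (constructive_indefinite_description _ (Hx a))).
Qed.

Lemma Cnorm2_ge0 a : 0 <= Cnorm2 a.
Proof. unfold Cnorm2. pose proof (Rle_0_sqr (re a)); pose proof (Rle_0_sqr (im a)); unfold Rsqr in *; lra. Qed.

Lemma Cnorm2_sym a b : Cnorm2 (Csub a b) = Cnorm2 (Csub b a).
Proof. unfold Cnorm2, Csub; simpl; ring. Qed.

Lemma Cnorm2_sub2 a b : Cnorm2 (Csub a b) <= 2 * Cnorm2 a + 2 * Cnorm2 b.
Proof. destruct a as [a1 a2]; destruct b as [b1 b2]; unfold Cnorm2, Csub; simpl.
 pose proof (Rle_0_sqr (a1+b1)). pose proof (Rle_0_sqr (a2+b2)). unfold Rsqr in *. lra. Qed.

Lemma Cnorm2_lam a b l : 0 < l ->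
  Cnorm2 b <= (1 + l) * Cnorm2 a + (1 + /l) * Cnorm2 (Csub b a).
Proof.
  intros Hl. destruct a as [a1 a2]; destruct b as [b1 b2]; unfold Cnorm2, Csub; simpl.
assert (K : forall u v : R, 2 * u * v <= l * u * u + /l * v * v).
{ intros u v. assert (0 <= /l * ((l * u - v) * (l * u - v))).
  { apply Rmult_le_pos. left; apply Rinv_0_lt_compat; auto. apply Rle_0_sqr. }
  assert (/l * ((l * u - v) * (l * u - v)) = l*u*u - 2*u*v + /l*v*v) by (field; lra).
  lra. }
pose proof (K a1 (b1 - a1)); pose proof (K a2 (b2 - a2)). lra. Qed.

Lemma sum_lin (f g h : nat -> R) al be n :
  (forall k, f k <= al * g k + be * h k) ->
  sum_f_R0 f n <= al * sum_f_R0 g n + be * sum_f_R0 h n.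
Proof.
  intro Hk; induction n; simpl. apply Hk.
  pose proof (Hk (S n)). rewrite !Rmult_plus_distr_l. lra.
Qed.

Definition tlf (w : vec) (N k : nat) : R := if Nat.leb k N then 0 else Cnorm2 (w k).
Definition tsum (w : vec) (N n : nat) : R := sum_f_R0 (tlf w N) n.
Definition hdf (w : vec) (N k : nat) : R := if Nat.leb k N then Cnorm2 (w k) else 0.

Lemma tlf_ge0 w N k : 0 <= tlf w N k.
Proof. unfold tlf; destruct (Nat.leb k N); [lra | apply Cnorm2_ge0]. Qed.

Lemma psum_ge0 w n : 0 <= psum w n.
Proof. unfold psum; induction n; simpl; [apply Cnorm2_ge0|pose proof (Cnorm2_ge0 (w (S n))); lra]. Qed.

Lemma psum_mono w n m : (n <= m)%nat -> psum w n <= psum w m.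
Proof.
  induction 1. lra. unfold psum in *; simpl. pose proof (Cnorm2_ge0 (w (S m))); lra.
Qed.

Lemma split_sum w N n : psum w n = sum_f_R0 (hdf w N) n + tsum w N n.
Proof.
  unfold tsum, psum. rewrite <- plus_sum. apply sum_eq. intros i _.
  unfold hdf, tlf. destruct (Nat.leb i N); lra.
Qed.

Lemma hd_le w N n : (n <= N)%nat -> sum_f_R0 (hdf w N) n = psum w n.
Proof.
  intro H; unfold psum. apply sum_eq. intros i Hi. unfold hdf.
  replace (Nat.leb i N) with true; [reflexivity|symmetry; apply Nat.leb_le; lia].
Qed.

Lemma hd_ge w N n : (N <= n)%nat -> sum_f_R0 (hdf w N) n = psum w N.
Proof.
  induction 1. apply hd_le; lia. simpl. rewrite IHle. unfold hdf.
  replace (Nat.leb (S m) N) with false; [ring|symmetry; apply Nat.leb_gt; lia].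
Qed.

Lemma psum_split_le w N n : psum w n <= psum w N + tsum w N n.
Proof.
  rewrite (split_sum w N n). destruct (le_lt_dec n N).
  - rewrite hd_le by lia. pose proof (psum_mono w n N l). lra.
  - rewrite hd_ge by lia. lra.
Qed.

Lemma tl_eq w N n : (N <= n)%nat -> tsum w N n = psum w n - psum w N.
Proof. intro H. rewrite (split_sum w N n), hd_ge by lia. ring. Qed.

Lemma tl_small w N n : (n <= N)%nat -> tsum w N n = 0.
Proof. intro H. pose proof (split_sum w N n). rewrite hd_le in H0 by lia. lra. Qed.

Lemma tl_le_psum w N n : tsum w N n <= psum w n.
Proof. rewrite (split_sum w N n). assert (0 <= sum_f_R0 (hdf w N) n).
  { apply cond_pos_sum. intro k; unfold hdf; destruct (Nat.leb k N); [apply Cnorm2_ge0|lra]. }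
  lra. Qed.

Lemma tl_mono w N N' n : (N <= N')%nat -> tsum w N' n <= tsum w N n.
Proof.
  intro H. unfold tsum. apply sum_Rle. intros k _. unfold tlf.
  destruct (Nat.leb k N') eqn:E1; destruct (Nat.leb k N) eqn:E2.
  - lra. - apply Cnorm2_ge0.
  - apply Nat.leb_le in E2; apply Nat.leb_gt in E1; lia.
  - lra.
Qed.

Lemma tl_lam b a N n l : 0 < l ->
  tsum b N n <= (1 + l) * tsum a N n + (1 + /l) * tsum (vsub b a) N n.
Proof.
  intros. unfold tsum. apply sum_lin. intro k. unfold tlf, vsub.
  destruct (Nat.leb k N). lra. apply Cnorm2_lam; auto.
Qed.

Lemma tl_sub2 a b N n : tsum (vsub a b) N n <= 2 * tsum a N n + 2 * tsum b N n.
Proof.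
  unfold tsum. apply sum_lin. intro k. unfold tlf, vsub.
  destruct (Nat.leb k N). lra. apply Cnorm2_sub2.
Qed.

Definition Fs (m N : nat) (T : BOp) : Prop :=
  forall x : H, normsq_le (hv x) 1 -> forall n, tsum (hv (op T x)) N n <= / INR (S m).

Lemma Fs_closed m N : SOT_closed (Fs m N).
Proof.
  unfold SOT_closed, SOT_open. intros T HT.
  unfold Fs in HT.
  apply not_all_ex_not in HT. destruct HT as [x HT].
  apply imply_to_and in HT. destruct HT as [Hx HT].
  apply not_all_ex_not in HT. destruct HT as [n HT]. apply Rnot_le_lt in HT.
  set (a := / INR (S m)) in *.
  set (t := tsum (hv (op T x)) N n) in *.
  assert (Ha : 0 < a) by (unfold a; apply Rinv_0_lt_compat, lt_0_INR; lia).
  set (l := (t - a) / (2 * a)).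
  assert (Hl : 0 < l) by (unfold l; apply Rdiv_lt_0_compat; lra).
  assert (Hli : 0 < / l) by (apply Rinv_0_lt_compat; auto).
  set (q := ((t - a) / 2) / (2 * (1 + / l))).
  assert (Hq : 0 < q) by (unfold q; apply Rdiv_lt_0_compat; lra).
  exists (x :: nil), (sqrt q). split. apply sqrt_lt_R0; auto.
  intros S HS Hf.
  destruct (HS x (or_introl eq_refl)) as [d [Hd Hn]].
  rewrite sqrt_sqrt in Hd by lra.
  specialize (Hf x Hx n). fold a in Hf.
  pose proof (tl_lam (hv (op T x)) (hv (op S x)) N n l Hl) as K. fold t in K.
  assert (tsum (vsub (hv (op T x)) (hv (op S x))) N n <= d).
  { eapply Rle_trans. apply tl_le_psum.
    unfold psum. erewrite sum_eq. apply (Hn n).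
    intros i _. unfold vsub. apply Cnorm2_sym. }
  assert (Hlt : (1 + / l) * tsum (vsub (hv (op T x)) (hv (op S x))) N n <= (1 + / l) * q).
  { apply Rmult_le_compat_l; lra. }
  assert (Hq2 : (1 + / l) * q = (t - a) / 4) by (unfold q; field; lra).
  assert (Hla : (1 + l) * a = (t + a) / 2) by (unfold l; field; lra).
  set (s := tsum (hv (op S x)) N n) in *.
  assert ((1 + l) * s <= (1 + l) * a) by (apply Rmult_le_compat_l; lra).
  lra.
Qed.

Lemma l2_tail y : l2 y -> forall eps, 0 < eps -> exists N0, forall n, tsum y N0 n <= eps.
Proof.
  intros [D HD] eps He.
  set (E := fun r => exists n, r = psum y n).
  assert (Hb : bound E) by (exists D; intros r [n ->]; apply HD).
  assert (Hne : exists r, E r) by (exists (psum y 0); exists 0%nat; auto).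
  destruct (completeness E Hb Hne) as [L [HL1 HL2]].
  assert (exists n0, psum y n0 > L - eps).
  { apply NNPP; intro Hc.
    assert (Hu : is_upper_bound E (L - eps)).
    { intros r [n ->]. apply Rnot_lt_le. intro; apply Hc; exists n; lra. }
    specialize (HL2 _ Hu). lra. }
  destruct H as [n0 Hn0]. exists n0. intro n.
  destruct (le_lt_dec n0 n).
  - rewrite tl_eq by auto. assert (psum y n <= L) by (apply HL1; exists n; auto). lra.
  - rewrite tl_small by lia. lra.
Qed.

Lemma strict_ge (phi : nat -> nat) : (forall k, (phi k < phi (S k))%nat) -> forall k, (k <= phi k)%nat.
Proof. intros Hp k; induction k. lia. specialize (Hp k); lia. Qed.

Lemma compact_Fs T : compact_op T -> forall m, exists N, Fs m N T.
Proof.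
  intros HT m. apply NNPP. intro Hc.
  assert (Hx : forall N, exists p : H * nat, normsq_le (hv (fst p)) 1 /\
            tsum (hv (op T (fst p))) N (snd p) > / INR (S m)).
  { intro N. apply NNPP; intro Hc2. apply Hc. exists N. intros x Hx n.
    apply Rnot_lt_le. intro; apply Hc2. exists (x, n); simpl; auto. }
  destruct (fchoice _ Hx) as [f Hf].
  destruct (HT (fun N => fst (f N))) as [phi [y [Hphi Hcv]]].
  { exists 1. intro k. apply (Hf k). }
  set (eps := / (4 * INR (S m))).
  assert (He : 0 < eps) by (unfold eps; apply Rinv_0_lt_compat; pose proof (lt_0_INR (S m) ltac:(lia)); lra).
  destruct (l2_tail (hv y) (proj2_sig y) eps He) as [N0 HN0].
  destruct (Hcv (sqrt eps) (sqrt_lt_R0 _ He)) as [K HK].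
  set (k := max K N0).
  destruct (HK k ltac:(unfold k; lia)) as [d [Hd Hn]].
  rewrite sqrt_sqrt in Hd by lra.
  destruct (Hf (phi k)) as [_ Hgt].
  set (z := hv (op T (fst (f (phi k))))) in *.
  set (nn := snd (f (phi k))) in *.
  assert (Hk : (N0 <= phi k)%nat) by (pose proof (strict_ge phi Hphi k); unfold k in *; lia).
  pose proof (tl_lam z (hv y) (phi k) nn 1 ltac:(lra)) as K1.
  rewrite Rinv_1 in K1.
  assert (tsum (hv y) (phi k) nn <= eps) by (eapply Rle_trans; [apply tl_mono, Hk| apply HN0]).
  assert (tsum (vsub z (hv y)) (phi k) nn <= d) by (eapply Rle_trans; [apply tl_le_psum | apply Hn]).
  assert (4 * eps = / INR (S m)) by (unfold eps; field; pose proof (lt_0_INR (S m) ltac:(lia)); lra).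
  lra.
Qed.

Definition strict (s : nat -> nat) := forall k, (s k < s (S k))%nat.

Lemma strict_ge' s : strict s -> forall k, (k <= s k)%nat.
Proof. intros Hp k; induction k. lia. specialize (Hp k); lia. Qed.

Lemma strict_lt s : strict s -> forall a b, (a < b)%nat -> (s a < s b)%nat.
Proof. intros Hs a b H; induction H. apply Hs. specialize (Hs m); lia. Qed.

Lemma bw (u : nat -> R) A : (forall k, Rabs (u k) <= A) ->
  exists t, strict t /\ exists l, Un_cv (fun k => u (t k)) l.
Proof.
  intro Hb.
  destruct (Bolzano_Weierstrass u (fun c => -A <= c <= A) (compact_P3 (-A) A)) as [l Hl].
  { intro k. specialize (Hb k). pose proof (Rle_abs (u k)). pose proof (Rle_abs (- u k)). rewrite Rabs_Ropp in *. split; lra. }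
  assert (Hp : forall p : nat * nat, exists q, (fst p <= q)%nat /\ Rabs (u q - l) < / INR (S (snd p))).
  { intros [N j]. simpl.
    assert (Hd : 0 < / INR (S j)) by (apply Rinv_0_lt_compat, lt_0_INR; lia).
    destruct (Hl (disc l (mkposreal _ Hd)) N) as [q [Hq1 Hq2]].
    - exists (mkposreal _ Hd). intros z Hz; exact Hz.
    - exists q. split; auto. }
  destruct (fchoice _ Hp) as [pk Hpk].
  set (t := fix t k := match k with 0 => pk (0%nat, 0%nat) | S k' => pk (S (t k'), S k') end).
  exists t. split.
  - intro k. simpl. destruct (Hpk (S (t k), S k)) as [H1 _]. simpl in H1. lia.
  - exists l. intros eps He.
    destruct (archimed_cor1 eps He) as [N [HN HN0]].
    exists N. intros k Hk. unfold R_dist.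
    assert (Hk' : Rabs (u (t k) - l) < / INR (S k)).
    { destruct k; simpl; [apply (Hpk (0%nat,0%nat)) | apply (Hpk (S (t k), S k))]. }
    eapply Rlt_trans. apply Hk'. eapply Rle_lt_trans; [|apply HN].
    apply Rinv_le_contravar. apply lt_0_INR; lia. apply le_INR; lia.
Qed.

Fixpoint subs (f : nat -> (nat -> nat) -> nat -> nat) (n : nat) : nat -> nat :=
  match n with
  | 0 => f 0%nat (fun k => k)
  | S n' => fun k => subs f n' (f (S n') (subs f n') k)
  end.

Lemma diag (P : nat -> (nat -> nat) -> Prop) :
  (forall c s, strict s -> exists t, strict t /\ P c (fun k => s (t k))) ->
  (forall c u d, P c u -> (forall k, (c <= k)%nat -> exists j, (k <= j)%nat /\ d k = u j) -> P c d) ->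
  exists d, strict d /\ forall c, P c d.
Proof.
  intros Hstep Hstab.
  assert (Hs : forall cs : nat * (nat -> nat), exists t,
             strict (snd cs) -> strict t /\ P (fst cs) (fun k => snd cs (t k))).
  { intros [c s]. simpl. destruct (classic (strict s)) as [Hs|Hs].
    - destruct (Hstep c s Hs) as [t Ht]. exists t; auto.
    - exists (fun k => k). intro; contradiction. }
  destruct (fchoice _ Hs) as [g Hg].
  set (f := fun c s => g (c, s)).
  assert (Hf : forall c s, strict s -> strict (f c s) /\ P c (fun k => s (f c s k))).
  { intros c s H. apply (Hg (c, s) H). }
  assert (Hid : strict (fun k => k)) by (intro; lia).
  assert (HS : forall n, strict (subs f n) /\ P n (subs f n)).
  { induction n; simpl.
    - destruct (Hf 0%nat _ Hid) as [H1 H2]. split; auto.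
    - destruct IHn as [H1 H2]. destruct (Hf (S n) _ H1) as [H3 H4]. split; auto.
      intro k. apply strict_lt; auto. }
  assert (Hrel : forall c n, (c <= n)%nat -> forall k, exists j, (k <= j)%nat /\ subs f n k = subs f c j).
  { intros c n; induction n; intros Hc k.
    - assert (c = 0%nat) by lia. subst. exists k; auto.
    - destruct (Nat.eq_dec c (S n)) as [->|Hne]. exists k; auto.
      simpl. destruct (IHn ltac:(lia) (f (S n) (subs f n) k)) as [j [Hj1 Hj2]].
      exists j. split; auto.
      pose proof (strict_ge' _ (proj1 (Hf (S n) _ (proj1 (HS n)))) k). lia. }
  exists (fun k => subs f k k). split.
  - intro k. simpl. apply strict_lt. apply HS.
    apply (strict_ge' _ (proj1 (Hf (S k) _ (proj1 (HS k))))).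
  - intro c. apply (Hstab c (subs f c)). apply HS.
    intros k Hk. destruct (Hrel c k Hk k) as [j [H1 H2]]. exists j; auto.
Qed.

Lemma cv_evsub (v : nat -> R) (u d : nat -> nat) c l :
  Un_cv (fun j => v (u j)) l ->
  (forall k, (c <= k)%nat -> exists j, (k <= j)%nat /\ d k = u j) ->
  Un_cv (fun k => v (d k)) l.
Proof.
  intros Hcv Hd eps He. destruct (Hcv eps He) as [N HN].
  exists (max N c). intros k Hk. destruct (Hd k ltac:(lia)) as [j [Hj ->]].
  apply HN. lia.
Qed.

Lemma cv_sub (v : nat -> R) (t : nat -> nat) l : strict t -> Un_cv v l -> Un_cv (fun k => v (t k)) l.
Proof.
  intros Ht Hcv eps He. destruct (Hcv eps He) as [N HN]. exists N. intros k Hk.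
  apply HN. pose proof (strict_ge' t Ht k). lia.
Qed.

Lemma cv_const a : Un_cv (fun _ => a) a.
Proof. intros eps He. exists 0%nat. intros. unfold R_dist. rewrite Rminus_diag, Rabs_R0. auto. Qed.

Lemma cv_sum (f : nat -> nat -> R) (g : nat -> R) n :
  (forall c, Un_cv (fun k => f k c) (g c)) ->
  Un_cv (fun k => sum_f_R0 (f k) n) (sum_f_R0 g n).
Proof.
  intro Hc. induction n; simpl. apply Hc. apply CV_plus; auto.
Qed.

Lemma cv_le (u : nat -> R) l B : Un_cv u l -> (forall k, u k <= B) -> l <= B.
Proof.
  intros Hcv Hb. apply Rnot_lt_le. intro Hlt.
  destruct (Hcv (l - B) ltac:(lra)) as [N HN]. specialize (HN N (le_n N)).
  specialize (Hb N). unfold R_dist in HN. apply Rabs_def2 in HN. lra.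
Qed.

Lemma cv_sub0 (u : nat -> R) l : Un_cv u l -> Un_cv (fun k => u k - l) 0.
Proof.
  intros Hcv eps He. destruct (Hcv eps He) as [N HN]. exists N. intros k Hk.
  unfold R_dist in *. rewrite Rminus_0_r. apply HN; auto.
Qed.

Lemma Cnorm2_scale c a : Cnorm2 (Cmul (mkC c 0) a) = c * c * Cnorm2 a.
Proof. unfold Cnorm2, Cmul; simpl; ring. Qed.

Lemma scale_Fs T (x : H) M : 0 < M -> normsq_le (hv x) M ->
  forall m N, Fs m N T -> forall n, tsum (hv (op T x)) N n <= M * / INR (S m).
Proof.
  intros HM Hx m N HF n.
  set (c := / sqrt M).
  assert (Hcc : c * c = / M).
  { unfold c. rewrite <- Rinv_mult, sqrt_sqrt; lra. }
  set (xv := fun k => Cmul (mkC c 0) (hv x k)).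
  assert (Hps : forall n, psum xv n = c * c * psum (hv x) n).
  { intro n0. unfold psum. rewrite scal_sum. apply sum_eq. intros i _.
    unfold xv. rewrite Cnorm2_scale. ring. }
  assert (Hl2 : l2 xv).
  { exists 1. intro n0. rewrite Hps, Hcc. specialize (Hx n0).
    apply (Rmult_le_compat_l (/ M)) in Hx; [|left; apply Rinv_0_lt_compat; auto].
    rewrite Rinv_l in Hx; lra. }
  set (x' := exist _ xv Hl2 : H).
  assert (Hx' : normsq_le (hv x') 1).
  { intro n0. simpl. rewrite Hps, Hcc. specialize (Hx n0).
    apply (Rmult_le_compat_l (/ M)) in Hx; [|left; apply Rinv_0_lt_compat; auto].
    rewrite Rinv_l in Hx; lra. }
  pose proof (op_scale T (mkC c 0) x x' (fun k => eq_refl)) as Hsc.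
  specialize (HF x' Hx' n).
  assert (Ht : tsum (hv (op T x')) N n = / M * tsum (hv (op T x)) N n).
  { unfold tsum. rewrite scal_sum. apply sum_eq. intros i _. unfold tlf.
    destruct (Nat.leb i N). ring. rewrite Hsc, Cnorm2_scale, Hcc. ring. }
  rewrite Ht in HF.
  apply (Rmult_le_compat_l M) in HF; [|lra].
  rewrite <- Rmult_assoc, Rinv_r, Rmult_1_l in HF; lra.
Qed.

Lemma sum0 n : sum_f_R0 (fun _ => 0) n = 0.
Proof. induction n; simpl; lra. Qed.

Lemma abs_le_sq r : Rabs r <= r * r + 1.
Proof.
  destruct (Rle_or_lt 0 r).
  - rewrite Rabs_right by lra. pose proof (Rle_0_sqr (r - 1/2)); unfold Rsqr in *; lra.
  - rewrite Rabs_left by lra. pose proof (Rle_0_sqr (r + 1/2)); unfold Rsqr in *; lra.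
Qed.

Lemma Fs_compact T : (forall m, exists N, Fs m N T) -> compact_op T.
Proof.
  intros G x [M0 HM0].
  assert (HM0p : 0 <= M0) by (pose proof (psum_ge0 (hv (x 0%nat)) 0); pose proof (HM0 0%nat 0%nat); lra).
  set (M := M0 + 1).
  assert (HM : 0 < M) by (unfold M; lra).
  assert (HxM : forall k, normsq_le (hv (x k)) M) by (intros k n; pose proof (HM0 k n); unfold M; lra).
  destruct (op_bdd T) as [K [HK0 HK]].
  set (B := K * K * M).
  set (z := fun k => hv (op T (x k))).
  assert (Hz : forall k, normsq_le (z k) B) by (intro k; apply HK, HxM).
  assert (Hcb : forall k c, Cnorm2 (z k c) <= B).
  { intros k c. eapply Rle_trans; [|apply (Hz k c)].
    destruct c. unfold psum; simpl; lra. unfold psum; simpl.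
    pose proof (psum_ge0 (z k) c) as Q. unfold psum in Q. pose proof (Cnorm2_ge0 (z k (S c))). lra. }
  assert (Hre : forall k c, Rabs (re (z k c)) <= B + 1).
  { intros k c. pose proof (abs_le_sq (re (z k c))) as Q1. pose proof (Hcb k c) as Q2.
    unfold Cnorm2 in Q2. pose proof (Rle_0_sqr (im (z k c))) as Q3. unfold Rsqr in *. lra. }
  assert (Him : forall k c, Rabs (im (z k c)) <= B + 1).
  { intros k c. pose proof (abs_le_sq (im (z k c))) as Q1. pose proof (Hcb k c) as Q2.
    unfold Cnorm2 in Q2. pose proof (Rle_0_sqr (re (z k c))) as Q3. unfold Rsqr in *. lra. }
  set (P := fun c (u : nat -> nat) =>
         (exists l, Un_cv (fun k => re (z (u k) c)) l) /\
         (exists l, Un_cv (fun k => im (z (u k) c)) l)).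
  destruct (diag P) as [d [Hd HP]].
  { intros c s Hs.
    destruct (bw (fun k => re (z (s k) c)) (B + 1) (fun k => Hre _ _)) as [t1 [Ht1 [l1 Hl1]]].
    destruct (bw (fun k => im (z (s (t1 k)) c)) (B + 1) (fun k => Him _ _)) as [t2 [Ht2 [l2 Hl2]]].
    exists (fun k => t1 (t2 k)). split.
    - intro k. apply strict_lt; auto.
    - split. exists l1. apply (cv_sub (fun k => re (z (s (t1 k)) c)) t2 l1 Ht2 Hl1).
      exists l2. exact Hl2. }
  { intros c u d0 [[l1 H1] [l2 H2]] Hd0. split.
    - exists l1. apply (cv_evsub (fun j => re (z j c)) u d0 c l1 H1 Hd0).
    - exists l2. apply (cv_evsub (fun j => im (z j c)) u d0 c l2 H2 Hd0). }
  assert (Hlim : forall c, exists p : R * R,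
     Un_cv (fun k => re (z (d k) c)) (fst p) /\ Un_cv (fun k => im (z (d k) c)) (snd p)).
  { intro c. destruct (HP c) as [[l1 H1] [l2 H2]]. exists (l1, l2). auto. }
  destruct (fchoice _ Hlim) as [g Hg].
  set (y := fun c => mkC (fst (g c)) (snd (g c))).
  set (w := fun k => z (d k)).
  assert (Hcn : forall c, Un_cv (fun k => Cnorm2 (w k c)) (Cnorm2 (y c))).
  { intro c. destruct (Hg c) as [H1 H2]. unfold Cnorm2, w, y; simpl.
    apply CV_plus; apply CV_mult; auto. }
  assert (Hdiff : forall c, Un_cv (fun k => Cnorm2 (Csub (w k c) (y c))) 0).
  { intro c. destruct (Hg c) as [H1 H2]. unfold Cnorm2, Csub, w, y; simpl.
    replace 0 with (0 * 0 + 0 * 0) by ring.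
    apply CV_plus; apply CV_mult; apply cv_sub0; auto. }
  assert (Hyb : normsq_le y B).
  { intro n. apply (cv_le (fun k => psum (w k) n)).
    - unfold psum. apply (cv_sum (fun k c => Cnorm2 (w k c))). auto.
    - intro k. apply Hz. }
  exists d, (exist _ y (ex_intro _ B Hyb)). split. exact Hd.
  intros eps He.
  set (e2 := eps * eps).
  assert (He2 : 0 < e2) by (unfold e2; nra).
  destruct (archimed_cor1 (e2 / (8 * M))) as [N' [HN' HN'0]].
  { apply Rdiv_lt_0_compat; lra. }
  set (m := pred N').
  assert (HSm : S m = N') by (unfold m; lia).
  destruct (G m) as [Nm HNm].
  set (a := M * / INR (S m)).
  assert (Ha : a < e2 / 8).
  { unfold a. rewrite HSm.
    apply (Rmult_lt_compat_l M) in HN'; auto.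
    replace (M * (e2 / (8 * M))) with (e2 / 8) in HN' by (field; lra). exact HN'. }
  assert (Hwt : forall k n, tsum (w k) Nm n <= a).
  { intros k n. apply (scale_Fs T (x (d k)) M HM (HxM _) m Nm HNm n). }
  assert (Hyt : forall n, tsum y Nm n <= a).
  { intro n. apply (cv_le (fun k => tsum (w k) Nm n)).
    - unfold tsum. apply (cv_sum (fun k c => tlf (w k) Nm c)).
      intro c. unfold tlf. destruct (Nat.leb c Nm). apply cv_const. apply Hcn.
    - intro k; apply Hwt. }
  assert (Hhd : Un_cv (fun k => psum (vsub (w k) y) Nm) 0).
  { rewrite <- (sum0 Nm). unfold psum. apply (cv_sum (fun k c => Cnorm2 (vsub (w k) y c))).
    intro c. apply Hdiff. }
  destruct (Hhd (e2 / 2) ltac:(lra)) as [K0 HK0'].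
  exists K0. intros k Hk. specialize (HK0' k Hk). unfold R_dist in HK0'.
  rewrite Rminus_0_r in HK0'. apply Rabs_def2 in HK0'.
  exists (psum (vsub (w k) y) Nm + 4 * a). split. fold e2. lra.
  intro n. simpl.
  pose proof (psum_split_le (vsub (w k) y) Nm n).
  pose proof (tl_sub2 (w k) y Nm n).
  pose proof (Hwt k n). pose proof (Hyt n).
  change (hv (op T (x (d k)))) with (w k). lra.
Qed.

Theorem mainTheorem6 : SOT_Fsigmadelta compact_op.
Proof.
  exists Fs. split.
  - intros m n. apply Fs_closed.
  - intro T. split.
    + apply compact_Fs.
    + apply Fs_compact.
Qed.
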